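(* Let $\boldsymbol{\omega}\in\mathbb{R}^d$ satisfy $|\boldsymbol{\omega}\cdot\boldsymbol{\nu}|>\gamma_0|\boldsymbol{\nu}|^{-\tau}$ for all $\boldsymbol{\nu}\in\mathbb{Z}^d\setminus\{\boldsymbol{0}\}$, with $\gamma_0>0$, $\tau>d-1$. Let $\boldsymbol{\nu},\boldsymbol{\nu}'\in\mathbb{Z}^d$ with $\boldsymbol{\nu}\ne\boldsymbol{\nu}'$, and suppose $\delta_j(\boldsymbol{\omega}\cdot\boldsymbol{\nu})=\delta_{j'}(\boldsymbol{\omega}\cdot\boldsymbol{\nu}')$ for some $j,j'\in\{1,\ldots,d\}$. Then either $|\boldsymbol{\nu}-\boldsymbol{\nu}'|\ge|\boldsymbol{\nu}|+|\boldsymbol{\nu}'|-2$ or $|\boldsymbol{\nu}-\boldsymbol{\nu}'|=2$.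
   Context: $|\boldsymbol{\nu}|=|\nu_1|+\cdots+|\nu_d|$. For $j\in\{1,\ldots,d\}$ and $\boldsymbol{\nu}\in\mathbb{Z}^d$, $\delta_j(\boldsymbol{\omega}\cdot\boldsymbol{\nu}):=\min\{|\boldsymbol{\omega}\cdot\boldsymbol{\nu}-\omega_j|,|\boldsymbol{\omega}\cdot\boldsymbol{\nu}+\omega_j|\}=|\boldsymbol{\omega}\cdot(\boldsymbol{\nu}-\sigma(\boldsymbol{\nu},j)\boldsymbol{e}_j)|$, where $\sigma(\boldsymbol{\nu},j)\in\{\pm1\}$ is a minimizer and $\boldsymbol{e}_j$ the $j$-th standard basis vector. *)

(* Defs.v *)
From HB Require Import structures.
From mathcomp Require Import all_boot all_order all_algebra.
From mathcomp Require Import all_classical all_reals all_analysis.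
Set Implicit Arguments. Unset Strict Implicit. Unset Printing Implicit Defensive.
Import Order.TTheory GRing.Theory Num.Theory.
Local Open Scope ring_scope.

Definition dotZ (R : realType) (d : nat) (w : 'I_d -> R) (nu : {ffun 'I_d -> int}) : R :=
  \sum_(i < d) w i * (nu i)%:~R.

Definition norm1 (d : nat) (nu : {ffun 'I_d -> int}) : nat :=
  (\sum_(i < d) `|nu i|%N)%N.

Definition subZ (d : nat) (nu nu' : {ffun 'I_d -> int}) : {ffun 'I_d -> int} :=
  [ffun i => nu i - nu' i].

Definition delta (R : realType) (d : nat) (w : 'I_d -> R) (j : 'I_d) (x : R) : R :=
  Num.min `|x - w j| `|x + w j|.

Definition diophantine (R : realType) (d : nat) (w : 'I_d -> R) (gamma0 tau : R) : Prop :=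
  forall nu : {ffun 'I_d -> int}, nu != 0 ->
    gamma0 * powR (norm1 nu)%:R (- tau) < `|dotZ w nu|.

(* Main.v *)
Require Import Defs.
From HB Require Import structures.
From mathcomp Require Import all_boot all_order all_algebra.
From mathcomp Require Import all_classical all_reals all_analysis.
From mathcomp Require Import zify ring.
Import Order.TTheory GRing.Theory Num.Theory.
Local Open Scope ring_scope.

Lemma min_cases {R : realType} (a b : R) : Num.min a b = a \/ Num.min a b = b.
Proof. rewrite /Num.min /Order.min; case: ifP; auto. Qed.

Lemma delta_pick {R : realType} {d : nat} (w : 'I_d -> R) (j : 'I_d) (x : R) :
  exists s : int, (s = 1 \/ s = -1) /\ delta w j x = `|x - s%:~R * w j|.
Proof.
rewrite /delta; case: (min_cases `|x - w j| `|x + w j|) => ->.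
- by exists 1; split; [left|rewrite mul1r].
- by exists (-1); split; [right|rewrite mulN1r opprK].
Qed.

Lemma norm_eq_cases {R : realType} (a b : R) : `|a| = `|b| -> a = b \/ a = - b.
Proof.
move=> h.
have : (a - b) * (a + b) = 0.
  have : a ^+ 2 = b ^+ 2 by rewrite -(real_normK (num_real a)) h real_normK // num_real.
  move=> e; rewrite -subr_sqr e subrr //.
move/eqP; rewrite mulf_eq0 => /orP [/eqP|/eqP] e.
- by left; apply/eqP; rewrite -subr_eq0 e.
- by right; apply/eqP; rewrite -subr_eq0 opprK e.
Qed.

Lemma sum_ind {R : realType} {d : nat} (w : 'I_d -> R) (j : 'I_d) :
  \sum_(i < d) w i * ((i == j)%:Z)%:~R = w j.
Proof.
rewrite (bigD1 j) //= eqxx mulr1 big1 ?addr0 // => i /negbTE ->; by rewrite mulr0.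
Qed.

Lemma sum_indn {d : nat} (j : 'I_d) : (\sum_(i < d) (i == j) = 1)%N.
Proof.
rewrite (bigD1 j) //= eqxx big1 ?addn0 // => i /negbTE ->; by [].
Qed.

Theorem lemma3p1 (R : realType) (d : nat) (w : 'I_d -> R) (gamma0 tau : R)
  (hg : 0 < gamma0) (htau : (d%:R - 1) < tau)
  (hdio : diophantine w gamma0 tau)
  (nu nu' : {ffun 'I_d -> int}) (hne : nu <> nu') (j j' : 'I_d)
  (heq : delta w j (dotZ w nu) = delta w j' (dotZ w nu')) :
  ((norm1 nu)%:Z + (norm1 nu')%:Z - 2 <= (norm1 (subZ nu nu'))%:Z)%R
  \/ norm1 (subZ nu nu') = 2%N.
Proof.
have [s [hs hd]] := delta_pick w j (dotZ w nu).
have [s' [hs' hd']] := delta_pick w j' (dotZ w nu').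
rewrite hd hd' in heq.
have [e [he hee]] : exists e : int, (e = 1 \/ e = -1) /\
   dotZ w nu - s%:~R * w j = e%:~R * (dotZ w nu' - s'%:~R * w j').
  case: (norm_eq_cases _ _ heq) => ->.
  - by exists 1; split; [left | rewrite mul1r].
  - by exists (-1); split; [right | rewrite mulN1r].
pose mu : {ffun 'I_d -> int} :=
  [ffun i => nu i - s * (i == j)%:Z - e * (nu' i - s' * (i == j')%:Z)].
have hmu : dotZ w mu = 0.
  have -> : dotZ w mu = \sum_(i < d) (w i * (nu i)%:~R - s%:~R * (w i * ((i == j)%:Z)%:~R)
        - e%:~R * (w i * (nu' i)%:~R) + e%:~R * s'%:~R * (w i * ((i == j')%:Z)%:~R)).
    rewrite /dotZ; apply: eq_bigr => i _; rewrite ffunE.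
    rewrite !(rmorphB, rmorphM) /=; ring.
  rewrite !big_split /= !sumrN -!mulr_sumr !sum_ind -/(dotZ w nu) -/(dotZ w nu').
  rewrite hee.
  ring.
have mu0 : mu = 0.
  apply/eqP; apply/negPn/negP => /hdio; rewrite hmu normr0 => h.
  have := powR_ge0 (norm1 mu)%:R (- tau).
  move=> h2; have := mulr_ge0 (ltW hg) h2; rewrite leNgt h //.
have hi : forall i, nu i - s * (i == j)%:Z = e * (nu' i - s' * (i == j')%:Z).
  move=> i; apply/eqP; rewrite -subr_eq0.
  have := congr1 (fun f : {ffun 'I_d -> int} => f i) mu0; rewrite /= ffunE => ->.
  by rewrite ffunE.
case: he => he; subst e.
- right.
  have hi1 : forall i, nu i - nu' i = s * (i == j)%:Z - s' * (i == j')%:Z.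
    by move=> i; have := hi i; rewrite mul1r => h; lia.
  case: (eqVneq j j') => [e | hjj'].
  + subst j'.
    have hss : s != s'.
      apply/eqP => hss; apply: hne; apply/ffunP => i.
      by have := hi1 i; rewrite hss subrr => /eqP; rewrite subr_eq0 => /eqP.
    rewrite /norm1 (bigD1 j) //= big1 ?addn0.
      rewrite ffunE hi1 eqxx.
      by move: hss; case: hs => ->; case: hs' => -> /=; lia.
    move=> i /negbTE hij; rewrite ffunE hi1 hij; lia.
  + rewrite /norm1 (bigD1 j) //= (bigD1 j') /=; last by rewrite eq_sym hjj'.
    rewrite big1 ?addn0.
      rewrite !ffunE !hi1 eqxx (negbTE hjj') eq_sym (negbTE hjj') eqxx.
      by case: hs => ->; case: hs' => -> /=; lia.
    move=> i /andP [/negbTE h1 /negbTE h2]; rewrite ffunE hi1 h1 h2; lia.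
- left.
  suff : (norm1 nu + norm1 nu' <= norm1 (subZ nu nu') + 2)%N by lia.
  rewrite /norm1 -big_split /=.
  rewrite -[2%N]/(1 + 1)%N -{1}(sum_indn j) -(sum_indn j') -!big_split /=.
  apply: leq_sum => i _; rewrite ffunE.
  have := hi i.
  case: (i == j); case: (i == j'); case: hs => ->; case: hs' => -> /= h; lia.
Qed.
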